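(* Let $k\ge 1$. If $C$ is an odd cycle that is a strict prime $k$th-power distance graph, then every cycle with more vertices than $C$ is also a strict prime $k$th-power distance graph.
   Context: A graph $G$ is a strict prime $k$th-power distance graph if there is an injective map $L:V(G)\to\mathbb{Z}$ such that for every edge $uv$ of $G$, $|L(u)-L(v)|=p^k$ for some prime $p$ (the prime may depend on the edge). *)

(* Defs.v *)
From mathcomp Require Import all_boot all_order all_algebra.
Set Implicit Arguments. Unset Strict Implicit. Unset Printing Implicit Defensive.

Definition strict_prime_pow_dist (k : nat) (T : finType) (e : rel T) : Prop :=
  exists L : T -> int, injective L /\
    forall u v : T, e u v -> exists p : nat, prime p /\ `|L u - L v|%N = p ^ k.

(* The cycle C_n on vertex set 'I_n (meaningful as a simple cycle for n >= 3):
   i ~ j iff j = i+1 mod n or i = j+1 mod n. *)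
Definition cycle_rel (n : nat) : rel 'I_n :=
  fun i j => (nat_of_ord j == i.+1 %% n) || (nat_of_ord i == j.+1 %% n).
Arguments cycle_rel n : clear implicits.

(* Main.v *)
Require Import Defs.
From mathcomp Require Import all_boot all_order all_algebra.
From mathcomp Require Import zify.
Set Implicit Arguments.

Definition good (k m : nat) (f : nat -> int) : Prop :=
  (forall i j, i < m -> j < m -> f i = f j -> i = j) /\
  (forall i, i < m -> exists p, prime p /\ absz (f i - f (i.+1 %% m)%N)%R = p ^ k).

Lemma good_spp k m f : 0 < m -> good k m f -> strict_prime_pow_dist k (cycle_rel m).
Proof.
move=> Hm [Hinj Hed]; exists (fun i : 'I_m => f (val i)); split.
  by move=> i j H; apply: val_inj; exact: Hinj (ltn_ord i) (ltn_ord j) H.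
move=> u v; rewrite /cycle_rel => /orP [/eqP Hv | /eqP Hu].
  move: (Hed u (ltn_ord u)); rewrite -Hv => [[p [Pp Hp]]].
  by exists p; split => //; rewrite -Hp; lia.
move: (Hed v (ltn_ord v)); rewrite -Hu => [[p [Pp Hp]]].
exists p; split => //; change (absz (f u - f v)%R = p ^ k).
by rewrite -abszN GRing.opprB.
Qed.

Lemma good_step k m f : 0 < k -> 1 < m -> good k m f -> exists f', good k m.+2 f'.
Proof.
case: m => [//|m] Hk Hm [Hinj Hed].
pose B := \max_(j < m.+1) absz (f j).
have Hb : forall i, i < m.+1 -> absz (f i) <= B.
  by move=> i Hi; apply: (@leq_bigmax _ (fun j : 'I_m.+1 => absz (f j)) (Ordinal Hi)).
have [q Hq Pq] := prime_above (2 * B).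
pose Q := q ^ k.
have HQ : 2 * B < Q.
  apply: (leq_trans Hq); rewrite /Q -{1}(expn1 q); apply: leq_pexp2l => //.
  exact: prime_gt0.
have HQdef : Q = q ^ k by [].
clearbody Q B.
have H0 := Hb 0 (ltn0Sn m).
have Hmp : m < m.+1 by [].
have Hm1 := Hb m Hmp.
have Hne : f m <> f 0.
  move=> /Hinj H; have := H Hmp (ltn0Sn m); lia.
pose g i := if i < m.+1 then f i else if i == m.+1 then (f m + Q%:Z)%R else (f 0%N + Q%:Z)%R.
have gE : forall i, i < m.+3 -> (g i = f i /\ i < m.+1) \/
    (g i = (f m + Q%:Z)%R /\ i = m.+1) \/ (g i = (f 0%N + Q%:Z)%R /\ i = m.+2).
  move=> i Hi; rewrite /g; case: ifP => H1; first by left.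
  case: ifP => /eqP H2; right; [left | right]; split => //; lia.
exists g.
split.
  move=> i j Hi Hj.
  case: (gE i Hi) => [[-> Hi']|[[-> ->]|[-> ->]]];
  case: (gE j Hj) => [[-> Hj']|[[-> ->]|[-> ->]]] => //.
  - exact: Hinj.
  - have := Hb i Hi'; lia.
  - have := Hb i Hi'; lia.
  - have := Hb j Hj'; lia.
  - lia.
  - have := Hb j Hj'; lia.
  - lia.
rewrite /g.
move=> i Hi.
have [Hlt | Hge] := ltnP i.+1 m.+1.
  have Hi' : i < m.+1 by lia.
  rewrite (modn_small (_ : i.+1 < m.+3)); last by lia.
  rewrite Hi' Hlt.
  have := Hed i Hi'; rewrite modn_small //.
have [Heq | Hneq] := eqVneq i m.
  rewrite Heq (modn_small (_ : m.+1 < m.+3)); last by lia.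
  rewrite ltnSn ltnn eqxx.
  exists q; split => //; rewrite -HQdef; lia.
have [Heq2 | Hneq2] := eqVneq i m.+1.
  rewrite Heq2 (modn_small (_ : m.+2 < m.+3)); last by lia.
  rewrite ltnn (_ : (m.+2 < m.+1) = false); last by lia.
  rewrite (_ : (m.+2 == m.+1) = false); last by lia.
  have := Hed m Hmp.
  rewrite modnn.
  move=> [p [Pp Hp]]; exists p; split => //; rewrite -Hp; lia.
have -> : i = m.+2 by lia.
rewrite modnn (_ : (m.+2 < m.+1) = false); last by lia.
rewrite ltn0Sn.
exists q; split => //; rewrite -HQdef; lia.
Qed.

Lemma good_iter k m f : 0 < k -> 1 < m -> good k m f ->
  forall j, exists f', good k (m + 2 * j) f'.
Proof.
move=> Hk Hm Hg; elim=> [|j [f' IH]].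
  by exists f; rewrite muln0 addn0.
have Hm' : 1 < m + 2 * j by lia.
have [g Hg'] := good_step Hk Hm' IH.
by exists g; have -> : m + 2 * j.+1 = (m + 2 * j).+2 by lia.
Qed.

Lemma good4 k : 0 < k -> exists f, good k 4 f.
Proof.
move=> Hk.
have H23 : 2 ^ k < 3 ^ k by rewrite ltn_exp2r.
have H2 : 0 < 2 ^ k by rewrite expn_gt0.
exists (fun i => if i == 0 then Posz 0 else if i == 1 then Posz (2 ^ k)
          else if i == 2 then Posz (2 ^ k + 3 ^ k) else Posz (3 ^ k)).
split.
  move=> i j Hi Hj.
  case: i Hi => [|[|[|[|i]]]] //= _; case: j Hj => [|[|[|[|j]]]] //= _; lia.
move=> i Hi.
case: i Hi => [|[|[|[|i]]]] //= _.
- exists 2; split => //; lia.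
- exists 3; split => //; lia.
- exists 2; split => //; lia.
- exists 3; split => //; lia.
Qed.

Theorem mainTheorem14 (k n : nat) :
  1 <= k -> 3 <= n -> odd n ->
  strict_prime_pow_dist k (cycle_rel n) ->
  forall m : nat, n < m -> strict_prime_pow_dist k (cycle_rel m).
Proof.
move=> Hk Hn Hodd [L [Linj Ledge]] m Hnm.
have Hm0 : 0 < m by lia.
have [Hmo | Hme] := boolP (odd m).
  pose f i := if insub i is Some o then L o else Posz 0.
  have fE : forall o : 'I_n, f o = L o by move=> o; rewrite /f valK.
  have Hg : good k n f.
    split.
      move=> i j Hi Hj.
      rewrite -[i]/(val (Ordinal Hi)) -[j]/(val (Ordinal Hj)) !fE.
      by move=> /Linj ->.
    move=> i Hi.
    have Hi1 : i.+1 %% n < n by rewrite ltn_mod; lia.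
    rewrite -[i]/(val (Ordinal Hi)) -[i.+1 %% n]/(val (Ordinal Hi1)) !fE.
    by apply: Ledge; rewrite /cycle_rel /= eqxx.
  have Hn1 : 1 < n by lia.
  have [g Hgg] := good_iter (leq_trans (isT : 0 < 1) Hk) Hn1 Hg ((m - n)./2).
  apply: (good_spp Hm0).
  have -> : m = n + 2 * (m - n)./2.
    have : ~~ odd (m - n) by rewrite oddB ?Hmo ?Hodd // ltnW.
    move=> He; rewrite -[in RHS](odd_double_half (m - n)) (negbTE He) add0n -muln2 mulnC.
    lia.
  exact: Hgg.
have Hk0 : 0 < k by lia.
have [f Hf] := @good4 k Hk0.
have [g Hgg] := good_iter Hk0 (isT : 1 < 4) Hf ((m - 4)./2).
apply: (good_spp Hm0).
have -> : m = 4 + 2 * (m - 4)./2.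
  have : ~~ odd (m - 4).
    rewrite oddB; last by lia.
    by rewrite (negbTE Hme).
  move=> He; rewrite -[in RHS](odd_double_half (m - 4)) (negbTE He) add0n -muln2 mulnC.
  lia.
exact: Hgg.
Qed.
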